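(* Let $M>N$. Then for a generic $M$-element frame $\mathcal F=\{f_1,\dots,f_M\}$ for $\mathbb R^N$, the set of vectors $x\in\mathbb R^N$ such that every $y\in\mathbb R^N$ with $|\langle y,f_k\rangle|=|\langle x,f_k\rangle|$ for all $k$ satisfies $y=\pm x$ contains an open dense subset of $\mathbb R^N$.
   Context: An $M$-element frame for $\mathbb R^N$ is a spanning family $\{f_1,\dots,f_M\}\subset\mathbb R^N$; ''generic'' means: for all frames in an open dense subset of the set of $M$-element frames (topology of $N\times M$ real matrices of rank $N$, or equivalently of their ranges of coefficients in the Grassmannian $Gr(N,M)$). *)

(* Defs.v *)
From HB Require Import structures.
From mathcomp Require Import all_boot all_order all_algebra.
From mathcomp Require Import all_classical all_reals all_analysis.
Set Implicit Arguments. Unset Strict Implicit. Unset Printing Implicit Defensive.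
Import Order.TTheory GRing.Theory Num.Theory.
Import numFieldTopology.Exports numFieldNormedType.Exports.
Local Open Scope classical_set_scope.
Local Open Scope ring_scope.

(* A frame {f_1,...,f_M} for R^N is encoded as the N x M real matrix F whose
   k-th column is f_k; it is a frame iff it spans R^N, i.e. \rank F = N.
   Vectors of R^N are row vectors 'rV[R]_N, and <y, f_k> = (y *m F) 0 k. *)
Definition frames (R : realType) (N M : nat) : set 'M[R]_(N, M) :=
  [set F | \rank F = N].

Definition phase_retrievable_set (R : realType) (N M : nat) (F : 'M[R]_(N, M))
  : set 'rV[R]_N :=
  [set x | forall y : 'rV[R]_N,
      (forall k : 'I_M, `|(y *m F) 0 k| = `|(x *m F) 0 k|) -> y = x \/ y = - x].

(* Main.v *)
Require Import Defs.
From HB Require Import structures.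
From mathcomp Require Import all_boot all_order all_algebra.
From mathcomp Require Import all_classical all_reals all_analysis.
From mathcomp Require Import fingroup perm.
From mathcomp Require Import zify.
Import Order.TTheory GRing.Theory Num.Theory.
Import numFieldTopology.Exports numFieldNormedType.Exports.
Local Open Scope classical_set_scope.
Local Open Scope ring_scope.

Section Aux.
Variable R : realType.

Lemma cont_det_colsub (N M : nat) (s : 'I_N -> 'I_M) :
  continuous (fun F : 'M[R]_(N, M) => \det (colsub s F)).
Proof.
have -> : (fun F : 'M[R]_(N, M) => \det (colsub s F)) =
  (fun F => \sum_(p : 'S_N) ((-1) ^+ p * \prod_i F i (s (p i)))).
  by apply: funext => F; rewrite /determinant; apply: eq_bigr => p _;
     congr (_ * _); apply: eq_bigr => i _; rewrite mxE.
apply: continuous_big; first exact: add_continuous.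
move=> p _ F.
apply: (@continuousM _ _ (fun=> ((-1) ^+ p : R)) (fun F : 'M[R]_(N, M) => \prod_i F i (s (p i))) F).
  exact: cst_continuous.
have := @continuous_big R _ (@GRing.mul R) 1 xpredT (@mul_continuous R) _ (index_enum 'I_N)
  (fun i (F : 'M[R]_(N, M)) => F i (s (p i))).
by apply=> // i _; apply: coord_continuous.
Qed.

Lemma open_dense_all (T : topologicalType) (I : finType) (A : I -> set T) :
  (forall i, open (A i) /\ dense (A i)) ->
  open [set x | forall i, A i x] /\ dense [set x | forall i, A i x].
Proof.
move=> hA.
suff H : forall s : seq I, open [set x | forall i, i \in s -> A i x] /\
    dense [set x | forall i, i \in s -> A i x].
  have -> : [set x | forall i, A i x] = [set x | forall i, i \in enum I -> A i x].
    by apply/seteqP; split => x /= h i //; rewrite ?mem_enum; apply: h; rewrite mem_enum.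
  exact: H.
elim=> [|a s [IHo IHd]].
  have -> : [set x | forall i, i \in [::] -> A i x] = setT.
    by apply/seteqP; split => x //=.
  split; first exact: openT.
  by move=> O [x Ox] _; exists x.
have -> : [set x | forall i, i \in a :: s -> A i x] =
    A a `&` [set x | forall i, i \in s -> A i x].
  apply/seteqP; split => x /=.
    by move=> h; split; [apply: h; rewrite inE eqxx | move=> i hi; apply: h; rewrite inE hi orbT].
  by move=> [h1 h2] i; rewrite inE => /orP[/eqP->|/h2].
have [oa da] := hA a.
split; first exact: openI.
exact: denseI.
Qed.

End Aux.

Section Aux2.
Variable R : realType.

Lemma hyper_open_dense (n : nat) (z : 'rV[R]_n) : z != 0 ->
  open [set x : 'rV[R]_n | (x *m z^T) 0 0 != 0] /\
  dense [set x : 'rV[R]_n | (x *m z^T) 0 0 != 0].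
Proof.
move=> z0.
have hE : forall x : 'rV[R]_n, (x *m z^T) 0 0 = \sum_i x 0 i * z 0 i.
  by move=> x; rewrite mxE; apply: eq_bigr => i _; rewrite mxE.
have hc : continuous (fun x : 'rV[R]_n => (x *m z^T) 0 0).
  have -> : (fun x : 'rV[R]_n => (x *m z^T) 0 0) =
     (fun x => \sum_i x 0 i * z 0 i) by apply: funext => x; exact: hE.
  apply: continuous_big; first exact: add_continuous.
  move=> i _ x.
  apply: (@continuousM _ _ (fun x : 'rV[R]_n => x 0 i) (fun=> z 0 i) x).
    exact: coord_continuous.
  exact: cst_continuous.
have zz : 0 < (z *m z^T) 0 0.
  rewrite hE; have [i zi] : exists i, z 0 i != 0.
    apply/existsP; apply: contraR z0 => /existsPn h.
    by apply/eqP/rowP => i; rewrite mxE; apply/eqP; move: (h i); rewrite negbK.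
  rewrite (bigD1 i) //= ltr_pwDl ?sumr_ge0 //; last by move=> j _; rewrite -expr2 sqr_ge0.
  by rewrite -expr2 lt_def sqrf_eq0 zi sqr_ge0.
split.
  have -> : [set x : 'rV[R]_n | (x *m z^T) 0 0 != 0] =
    (fun x : 'rV[R]_n => (x *m z^T) 0 0) @^-1` [set r | r != 0] by [].
  by apply: open_comp; [move=> x _; exact: hc | exact: open_neq].
move=> O [p Op] oO.
have : nbhs p O by apply: open_nbhs_nbhs; split.
move/nbhs_ballP => [e e0 sub].
have [hp|hp] := eqVneq ((p *m z^T) 0 0) 0; last by exists p.
pose t := e / (`|z| + 1).
have t0 : 0 < t by rewrite divr_gt0 // ltr_pwDr.
exists (p + t *: z); split.
  apply: sub; rewrite -ball_normE /ball_ /= opprD addrA subrr add0r normrN normrZ.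
  rewrite gtr0_norm // /t mulrAC ltr_pdivrMr ?ltr_pwDr //.
  by rewrite ltr_pM2l // ltrDl.
rewrite /= mulmxDl -scalemxAl mxE [X in X + _]hp add0r mxE.
by rewrite mulf_neq0 // ?gt_eqF.
Qed.

End Aux2.
Arguments hyper_open_dense {R n}.

Section Lin.
Variable R : realType.

Definition maskS {M : nat} (S : {set 'I_M}) : 'rV[R]_M :=
  \row_k (if k \in S then 1 else 0).

Definition AS {N M : nat} (F : 'M[R]_(N, M)) (S : {set 'I_M}) :=
  F *m diag_mx (maskS S).

Lemma rank_colsub_le {N M n : nat} (s : 'I_n -> 'I_M) (X : 'M[R]_(N, M)) :
  (\rank (colsub s X) <= \rank X)%N.
Proof. by rewrite -[X in colsub _ X]mulmx1 -mulmx_colsub mxrankM_maxl. Qed.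

Lemma rankAS {N M : nat} (hMN : (N < M)%N) (F : 'M[R]_(N, M))
  (hG : forall s : {ffun 'I_N -> 'I_M}, injectiveb s -> \det (colsub s F) != 0)
  (S : {set 'I_M}) : (minn #|S| N <= \rank (AS F S))%N.
Proof.
have M0 : (0 < M)%N by apply: leq_ltn_trans hMN.
pose x0 : 'I_M := Ordinal M0.
pose e := enum S ++ enum (~: S).
have se : size e = M by rewrite size_cat -!cardE cardsC card_ord.
have ue : uniq e.
  rewrite cat_uniq !enum_uniq /= andbT; apply/hasPn => x.
  by rewrite !mem_enum finset.in_setC.
pose s := [ffun j : 'I_N => nth x0 e j].
have sinj : injectiveb s.
  apply/injectiveP => i j; rewrite !ffunE => /eqP; rewrite nth_uniq ?se //.
    by move=> /eqP; apply: val_inj.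
  by apply: ltn_trans hMN. by apply: ltn_trans hMN.
have hsS : forall j : 'I_N, (s j \in S) = (j < #|S|)%N.
  move=> j; rewrite ffunE nth_cat -cardE; case: ifP => hj.
    by rewrite -mem_enum mem_nth // -cardE.
  have : nth x0 (enum (~: S)) (j - #|S|) \in ~: S.
    rewrite -mem_enum mem_nth // -cardE.
    have := cardsC S; rewrite card_ord => hc.
    rewrite ltn_subLR ?hc; first exact: ltn_trans (ltn_ord j) hMN.
    by rewrite leqNgt hj.
  by rewrite finset.in_setC => /negbTE.
have key : colsub s (AS F S) = colsub s F *m pid_mx (minn #|S| N).
  apply/matrixP => i j; rewrite /AS mul_mx_diag !mxE (bigD1 j) //= big1.
    rewrite /pid_mx !mxE eqxx /= hsS.
    have -> : (j < minn #|S| N)%N = (j < #|S|)%N.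
      by have := ltn_ord j; lia.
    by case: (j < #|S|)%N; rewrite ?mulr1 ?mulr0 addr0.
  move=> l /negbTE hl; rewrite /pid_mx !mxE.
  have -> : (nat_of_ord l == nat_of_ord j) = false.
    by apply: contraFF hl => /eqP h; apply/eqP/val_inj.
  by rewrite /= mulr0.
have := rank_colsub_le (s : _ -> _) (AS F S); rewrite key.
rewrite -mxrank_tr trmx_mul mxrankMfree; last first.
  by rewrite row_free_unit unitmx_tr unitmxE unitfE hG.
by rewrite mxrank_tr rank_pid_mx // ?geq_minr.
Qed.

Lemma arith (a b c d s t N M : nat) : (c + d = a + b)%N -> (c <= N)%N ->
  (minn s N <= a)%N -> (minn t N <= b)%N -> (0 < s)%N -> (0 < t)%N ->
  (s + t = M)%N -> (N < M)%N -> (0 < N)%N -> (0 < d)%N.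
Proof. rewrite /minn; case: ltnP => h1; case: ltnP => h2; lia. Qed.

Lemma capz {N M : nat} (hMN : (N < M)%N) (hN : (0 < N)%N) (F : 'M[R]_(N, M))
  (hG : forall s : {ffun 'I_N -> 'I_M}, injectiveb s -> \det (colsub s F) != 0)
  (S : {set 'I_M}) : S != finset.set0 -> S != finset.setTfor 'I_M ->
  exists z : 'rV[R]_N, z != 0 /\
    (forall u : 'rV[R]_N, u *m AS F S = 0 -> u *m z^T = 0) /\
    (forall v : 'rV[R]_N, v *m AS F (~: S) = 0 -> v *m z^T = 0).
Proof.
move=> S0 ST.
have h1 := rankAS hMN F hG S; have h2 := rankAS hMN F hG (~: S).
have c1 : (0 < #|S|)%N by rewrite card_gt0.
have c2 : (0 < #|~: S|)%N.
  rewrite card_gt0; apply: contraNneq ST => hC.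
  by rewrite -(finset.setCK S) hC finset.setC0.
have hc := cardsC S; rewrite card_ord in hc.
pose A1 := (AS F S)^T; pose A2 := (AS F (~: S))^T.
have hsc := mxrank_sum_cap A1 A2.
have hle := rank_leq_col (A1 + A2)%MS.
have : (0 < \rank (A1 :&: A2)%MS)%N.
  move: hsc hle h1 h2 c1 c2 hc hMN hN; rewrite /A1 /A2 !mxrank_tr; exact: arith.
rewrite lt0n mxrank_eq0 => C0.
have [i Ci] : exists i, row i (A1 :&: A2)%MS != 0.
  apply/existsP; apply: contraR C0 => /existsPn h.
  by apply/eqP/row_matrixP => i; rewrite row0; apply/eqP; move: (h i); rewrite negbK.
exists (row i (A1 :&: A2)%MS); split => //.
have zs1 : (row i (A1 :&: A2)%MS <= A1)%MS :=
  submx_trans (row_sub i _) (capmxSl A1 A2).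
have zs2 : (row i (A1 :&: A2)%MS <= A2)%MS :=
  submx_trans (row_sub i _) (capmxSr A1 A2).
split=> [u hu|v hv].
  move: zs1 => /submxP [w1 ->].
  by rewrite trmx_mul /A1 trmxK mulmxA hu mul0mx.
move: zs2 => /submxP [w2 ->].
by rewrite trmx_mul /A2 trmxK mulmxA hv mul0mx.
Qed.

End Lin.
Arguments AS {R N M}.
Arguments maskS {R M}.
Arguments capz {R N M}.
Arguments rankAS {R N M}.
Arguments rank_colsub_le {R N M n}.

Section Good.
Variable R : realType.

Lemma abs_eq_cases {a b : R} : `|a| = `|b| -> a = b \/ a = - b.
Proof.
move=> h; have : a ^+ 2 == b ^+ 2.
  by rewrite -(real_normK (num_real a)) -(real_normK (num_real b)) h.
by rewrite eqf_sqr => /orP[/eqP->|/eqP->]; [left|right].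
Qed.

Lemma good_U {N M : nat} (hMN : (N < M)%N) (F : 'M[R]_(N, M))
  (hG : forall s : {ffun 'I_N -> 'I_M}, injectiveb s -> \det (colsub s F) != 0)
  (hrank : \rank F = N) :
  exists U : set 'rV[R]_N, [/\ open U, dense U & U `<=` phase_retrievable_set F].
Proof.
have [N0|Npos] := posnP N.
  subst N; exists setT; split; first exact: openT.
    by move=> O [x Ox] _; exists x.
  by move=> x _ y _; left; apply/rowP => -[].
have hz : forall S : {set 'I_M}, exists z : 'rV[R]_N,
    (S != finset.set0) && (S != finset.setTfor 'I_M) -> z != 0 /\
    (forall u : 'rV[R]_N, u *m AS F S = 0 -> u *m z^T = 0) /\
    (forall v : 'rV[R]_N, v *m AS F (~: S) = 0 -> v *m z^T = 0).
  move=> S; case: (boolP ((S != finset.set0) && (S != finset.setTfor 'I_M))).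
    move=> /andP[a b]; have [z hz] := capz hMN Npos F hG S a b.
    by exists z.
  by move=> h; exists 0 => h'; exfalso; move/negP: h; apply.
have [zf hzf] := boolp.choice hz.
pose UU (S : {set 'I_M}) := [set x : 'rV[R]_N |
   (S != finset.set0) && (S != finset.setTfor 'I_M) -> (x *m (zf S)^T) 0 0 != 0].
exists [set x | forall S, UU S x].
have [Uo Ud] : open [set x | forall S, UU S x] /\ dense [set x | forall S, UU S x].
  apply: open_dense_all => S.
  case: (boolP ((S != finset.set0) && (S != finset.setTfor 'I_M))) => hS.
    have [z0 _] := hzf S hS.
    have -> : UU S = [set x : 'rV[R]_N | (x *m (zf S)^T) 0 0 != 0].
      by apply/seteqP; split => x /=; [apply; exact: hS | move=> h _].
    exact: hyper_open_dense.
  have -> : UU S = setT.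
    by apply/seteqP; split => x //= _ h; rewrite h in hS.
  split; first exact: openT.
  by move=> O [x Ox] _; exists x.
split => // x hx y hxy.
pose S := [set k | (y *m F) 0 k == (x *m F) 0 k]%SET.
have hnS : forall k, k \notin S -> (y *m F) 0 k = - (x *m F) 0 k.
  move=> k; rewrite /S finset.in_set => /eqP hk.
  by case: (abs_eq_cases (hxy k)) => // h; case: (hk h).
have Ffree : row_free F by rewrite /row_free hrank.
case: (eqVneq S (finset.setTfor 'I_M)) => hST.
  left; apply/eqP; rewrite -subr_eq0 -(mulmx_free_eq0 _ Ffree).
  apply/eqP/rowP => k; rewrite mulmxBl.
  have : k \in S by rewrite hST inE.
  rewrite /S finset.in_set => /eqP e.
  have -> : (y *m F - x *m F) 0 k = (y *m F) 0 k - (x *m F) 0 k by rewrite !mxE.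
  by rewrite e subrr mxE.
case: (eqVneq S finset.set0) => hS0.
  right; apply/eqP; rewrite -subr_eq0 opprK -(mulmx_free_eq0 _ Ffree).
  apply/eqP/rowP => k; rewrite mulmxDl.
  have : k \notin S by rewrite hS0 inE.
  move/hnS => e.
  have -> : (y *m F + x *m F) 0 k = (y *m F) 0 k + (x *m F) 0 k by rewrite !mxE.
  by rewrite e addNr mxE.
exfalso.
have hS : (S != finset.set0) && (S != finset.setTfor 'I_M) by rewrite hS0 hST.
have [_ [hu hv]] := hzf S hS.
have e1 : (y - x) *m AS F S = 0.
  rewrite /AS mulmxA mul_mx_diag; apply/matrixP => i k.
  rewrite ord1 mxE [maskS S 0 k]mxE [RHS]mxE.
  case: ifP => kS; last by rewrite mulr0.
  move: kS; rewrite /S finset.in_set => /eqP e; rewrite mulmxBl.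
  have -> : (y *m F - x *m F) 0 k = (y *m F) 0 k - (x *m F) 0 k by rewrite !mxE.
  by rewrite e subrr mul0r.
have e2 : (y + x) *m AS F (~: S) = 0.
  rewrite /AS mulmxA mul_mx_diag; apply/matrixP => i k.
  rewrite ord1 mxE [maskS (~: S) 0 k]mxE [RHS]mxE.
  case: ifP => kS; last by rewrite mulr0.
  move: kS; rewrite finset.in_setC => /hnS e; rewrite mulmxDl.
  have -> : (y *m F + x *m F) 0 k = (y *m F) 0 k + (x *m F) 0 k by rewrite !mxE.
  by rewrite e addNr mul0r.
have := hx S; rewrite /UU /= hS => /(_ isT); apply/negP; rewrite negbK.
have : ((y + x - (y - x)) *m (zf S)^T) 0 0 == 0.
  by rewrite mulmxBl (hu _ e1) (hv _ e2) subrr mxE.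
have -> : y + x - (y - x) = x + x.
  by rewrite opprB addrC addrA subrK.
have -> : ((x + x) *m (zf S)^T) 0 0 = (x *m (zf S)^T) 0 0 *+ 2.
  by rewrite mulmxDl mulr2n !mxE.
by rewrite mulrn_eq0.
Qed.

End Good.

Section Gen.
Variable R : realType.

Definition Gset (N M : nat) : set 'M[R]_(N, M) :=
  [set F | forall s : {ffun 'I_N -> 'I_M}, injectiveb s -> \det (colsub s F) != 0].

Lemma Gset_frames (N M : nat) (hMN : (N < M)%N) : Gset N M `<=` @frames R N M.
Proof.
move=> F hF; rewrite /frames /=.
pose s0 := [ffun j : 'I_N => widen_ord (ltnW hMN) j].
have s0inj : injectiveb s0.
  by apply/injectiveP => i j; rewrite !ffunE => /(congr1 val) /= h; apply: val_inj.
have h1 := rank_colsub_le (s0 : _ -> _) F.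
rewrite mxrank_unit in h1; last by rewrite unitmxE unitfE hF.
by apply/eqP; rewrite eqn_leq rank_leq_row h1.
Qed.

Lemma Gset_open (N M : nat) : open (Gset N M).
Proof.
pose P := fun F : 'M[R]_(N, M) =>
  \prod_(s : {ffun 'I_N -> 'I_M} | injectiveb s) \det (colsub s F).
have -> : Gset N M = P @^-1` [set r | r != 0].
  apply/seteqP; split => F /=.
    by move=> hF; apply/prodf_neq0 => s hs; exact: hF.
  by move/prodf_neq0 => h s hs; exact: h.
apply: open_comp; last exact: open_neq.
move=> F _.
have := @continuous_big R _ (@GRing.mul R) 1 (fun s : {ffun 'I_N -> 'I_M} => injectiveb s)
  (@mul_continuous R) _ (index_enum _) (fun s (F : 'M[R]_(N, M)) => \det (colsub s F)).
by apply=> // s _; apply: cont_det_colsub.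
Qed.

Lemma Gset_dense (N M : nat) : dense (Gset N M).
Proof.
move=> O [F0 OF0] oO.
have : nbhs F0 O by apply: open_nbhs_nbhs; split.
move/nbhs_ballP => [e e0 sub].
pose a : 'rV[R]_M := \row_j (nat_of_ord j)%:R.
pose V := @Vandermonde R N M a.
have hV : forall s : {ffun 'I_N -> 'I_M}, injectiveb s -> \det (colsub s V) != 0.
  move=> s /injectiveP sinj.
  have -> : colsub s V = @Vandermonde R N N (colsub s a).
    by apply/matrixP => i j; rewrite !mxE.
  rewrite det_Vandermonde; apply/prodf_neq0 => i _; apply/prodf_neq0 => j hij.
  rewrite !mxE subr_eq0 eqr_nat; apply/negP => /eqP h.
  have : s j = s i by apply: val_inj.
  move/sinj => hji; move: hij; rewrite hji ltnn.
  by [].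
pose q (s : {ffun 'I_N -> 'I_M}) : {poly R} :=
  \det ('X *: map_mx polyC (colsub s F0) + map_mx polyC (colsub s V)).
have hq : forall s t, (q s).[t] = \det (t *: colsub s F0 + colsub s V).
  move=> s t; rewrite /q -horner_evalE -det_map_mx; congr (\det _).
  apply/matrixP => i j; rewrite !mxE /=.
  match goal with |- _ ?p = _ => transitivity p.[t]; first by [] end.
  by rewrite hornerD hornerM hornerX !hornerC.
have hq0 : forall s : {ffun 'I_N -> 'I_M}, injectiveb s -> q s != 0.
  move=> s hs; apply: contra (hV s hs) => /eqP h.
  by move: (hq s 0); rewrite h horner0 scale0r add0r => <-.
pose Q := \prod_(s : {ffun 'I_N -> 'I_M} | injectiveb s) q s.
have hQ : Q != 0 by apply/prodf_neq0 => s hs; exact: hq0.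
pose K := Num.bound (`|V| / e).
have hK : `|V| / e < K%:R by apply: archi_boundP; rewrite divr_ge0 // ltW.
pose rs := [seq (K + i.+1)%:R : R | i <- iota 0 (size Q)].
have urs : uniq rs.
  rewrite map_inj_uniq ?iota_uniq // => i j /eqP; rewrite eqr_nat => /eqP h.
  by apply/eqP; rewrite -eqSS -(eqn_add2l K) h.
have : ~~ all (root Q) rs.
  apply/negP => hall; have := max_poly_roots hQ hall urs.
  by rewrite size_map size_iota ltnn.
case/allPn => t /mapP [i _ ->] {t}; set t := (K + i.+1)%:R => hroot.
have tK : K%:R < t by rewrite ltr_nat addnS ltnS leq_addr.
have t0 : 0 < t by apply: le_lt_trans tK.
exists (F0 + t^-1 *: V); split.
  apply: sub; rewrite -ball_normE /ball_ /= opprD addrA subrr add0r normrN normrZ.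
  rewrite gtr0_norm ?invr_gt0 // mulrC ltr_pdivrMr //.
  have := lt_trans hK tK; rewrite ltr_pdivrMr // mulrC.
  by [].
move=> s hs.
have -> : colsub s (F0 + t^-1 *: V) = t^-1 *: (t *: colsub s F0 + colsub s V).
  by apply/matrixP => i0 j0; rewrite !mxE mulrDr mulrA mulVf ?gt_eqF // mul1r.
rewrite detZ mulf_neq0 //; first by rewrite expf_neq0 // invr_eq0 gt_eqF.
rewrite -hq.
by move: hroot; rewrite rootE /Q horner_prod => /prodf_neq0; apply.
Qed.

End Gen.


Theorem theorem2p9 (R : realType) (N M : nat) (hMN : (N < M)%N) :
  exists G : set 'M[R]_(N, M),
    [/\ G `<=` @frames R N M, open G, dense G &
      forall F : 'M[R]_(N, M), G F ->
        exists U : set 'rV[R]_N,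
          [/\ open U, dense U & U `<=` phase_retrievable_set F]].
Proof.
exists (Gset R N M); split.
- exact: Gset_frames.
- exact: Gset_open.
- exact: Gset_dense.
- move=> F hF; apply: (good_U _ hMN F hF).
  exact: (Gset_frames _ _ _ hMN _ hF).
Qed.
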